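(* Let $n\in\mathbb{N}$ and let $\mathcal{H}_n$ be such that the random array $M^{(n)}=\{\mu_{j,l}:1\le j\le n+1,1\le l\le 2^j-1\}$ of the $\mathrm{DSBA}(n,\mathcal{H}_n)$ construction almost surely has distinct level $n$ entries $\mu_{n,1},\ldots,\mu_{n,2^n-1}$ and coincides with the first $n+1$ rows of the SBA of some probability measure with a regular level $n$ SBA. Then the resulting random measure $G=\mathcal{T}_n(M^{(n)})$ is a measurable random element of $\mathcal{P}(\Theta)$ endowed with the Borel $\sigma$-algebra of the weak topology, and, for every $p\in[1,\infty)$, of $\mathcal{P}_p(\Theta)$ endowed with the Borel $\sigma$-algebra of the topology induced by the Wasserstein distance $W_p$.
   Context: $\Theta\subseteq\mathbb{R}$ is $\mathbb{R}$, a closed half-line, or a compact interval with nonempty interior. SBA of a measure $G$ with finite mean: $\mu_{1,1}=\int\theta\,dG$; $\mu_{j,2l}=\mu_{j-1,l}$, $\mu_{j,2l-1}=b_G(\mu_{j-1,l-1},\mu_{j-1,l}]$ where $b_G(a_1,a_2]=\int_{(a_1,a_2]}\theta\,dG/(G(a_2)-G(a_1))$ (or $a_1$ if the mass is zero), $\mu_{j,0}=\inf\Theta$, $\mu_{j,2^j}=\sup\Theta$; a regular level $n$ SBA means $\mu_{n,1},\ldots,\mu_{n,2^n-1}$ distinct. $\mathrm{DSBA}(n,\mathcal{H}_n)$, for $\mathcal{H}_n=\{H_{j,2l-1}:1\le j\le n+1,1\le l\le 2^{j-1}\}$ probability measures on $\Theta$: $\mu_{1,1}\sim H_{1,1}$;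 for $j=2,\ldots,n+1$, $\mu_{j,2l}=\mu_{j-1,l}$ and $\mu_{j,2l-1}$ independently from $H_{j,2l-1}$ conditioned to $(\mu_{j-1,l-1},\mu_{j-1,l}]$. The map $\mathcal{T}_n$ sends an array to $\sum_{l=1}^{2^n}w_{n,l}\delta_{\mu_{n+1,2l-1}}$ with $w_{n,l}=F(\mu_{n,l})-F(\mu_{n,l-1})$, where $F(\mu_{j,0})=0$, $F(\mu_{j,2^j})=1$, $F(\mu_{j,2l})=F(\mu_{j-1,l})$ and, for $1\le j\le n$, $F(\mu_{j,2l-1})=F(\mu_{j-1,l-1})+[F(\mu_{j-1,l})-F(\mu_{j-1,l-1})]\frac{\mu_{j+1,4l-1}-\mu_{j+1,4l-2}}{\mu_{j+1,4l-1}-\mu_{j+1,4l-3}}$ ($0/0=1$). *)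

(* Defs.v *)
From HB Require Import structures.
From mathcomp Require Import all_boot all_order all_algebra.
From mathcomp Require Import all_classical all_reals all_analysis.
Set Implicit Arguments. Unset Strict Implicit. Unset Printing Implicit Defensive.
Import Order.TTheory GRing.Theory Num.Theory.
Import numFieldNormedType.Exports.
Local Open Scope classical_set_scope.
Local Open Scope ring_scope.

Section Defs.
Variable R : realType.

Definition is_Theta (Th : set R) : Prop :=
  Th = setT \/
  (exists a : R, Th = [set x | a <= x]) \/
  (exists a : R, Th = [set x | x <= a]) \/
  (exists a b : R, a < b /\ Th = [set x | a <= x <= b]).

Definition infTh (Th : set R) : \bar R := ereal_inf (EFin @` Th).
Definition supTh (Th : set R) : \bar R := ereal_sup (EFin @` Th).

Definition PTheta (Th : set R) : set (probability R R) :=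
  [set Q | Q Th = 1%E].

Definition ocI (a b : \bar R) : set R := [set x | (a < x%:E)%E /\ (x%:E <= b)%E].

Definition bary (Q : probability R R) (a1 a2 : \bar R) : \bar R :=
  if Q (ocI a1 a2) == 0%E then a1
  else (fine (\int[Q]_(x in ocI a1 a2) x%:E) / fine (Q (ocI a1 a2)))%:E.

Fixpoint sba (Th : set R) (Q : probability R R) (j l : nat) : \bar R :=
  match j with
  | 0 => if l == 0%N then infTh Th else supTh Th
  | j'.+1 =>
      if l == 0%N then infTh Th
      else if l == (2 ^ j'.+1)%N then supTh Th
      else if j' == 0%N then (fine (\int[Q]_x x%:E))%:E
      else if odd l then bary Q (sba Th Q j' l./2) (sba Th Q j' l.+1./2)
      else sba Th Q j' l./2
  end.

Definition finite_mean (Q : probability R R) : Prop :=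
  (\int[Q]_x (`|x|)%:E < +oo)%E.

Definition regular_sba (Th : set R) (Q : probability R R) (n : nat) : Prop :=
  forall l1 l2, (1 <= l1 <= 2 ^ n - 1)%N -> (1 <= l2 <= 2 ^ n - 1)%N ->
    sba Th Q n l1 = sba Th Q n l2 -> l1 = l2.

(* arrays: m j l = mu_{j,l} for 1 <= l <= 2^j - 1 (boundary entries are
   inf Th / sup Th and are handled separately) *)
Definition ext_entry (Th : set R) (m : nat -> nat -> R) (j l : nat) : \bar R :=
  if l == 0%N then infTh Th else if l == (2 ^ j)%N then supTh Th
  else (m j l)%:E.

Definition ratio01 (num den : R) : R := if den == 0 then 1 else num / den.

(* Fv m j l = F(mu_{j,l}) *)
Fixpoint Fv (m : nat -> nat -> R) (j l : nat) : R :=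
  match j with
  | 0 => if l == 0%N then 0 else 1
  | j'.+1 =>
      if l == 0%N then 0
      else if l == (2 ^ j'.+1)%N then 1
      else if odd l then
        let k := l.+1./2 in
        Fv m j' (k - 1)%N + (Fv m j' k - Fv m j' (k - 1)%N) *
          ratio01 (m j'.+2 (4 * k - 1)%N - m j'.+2 (4 * k - 2)%N)
                  (m j'.+2 (4 * k - 1)%N - m j'.+2 (4 * k - 3)%N)
      else Fv m j' l./2
  end.

Definition wgt (m : nat -> nat -> R) (n l : nat) : R := Fv m n l - Fv m n (l - 1)%N.

Definition Tn (m : nat -> nat -> R) (n : nat) (A : set R) : \bar R :=
  (\sum_(1 <= l < (2 ^ n).+1) ((wgt m n l)%:E * \d_(m n.+1 (2 * l - 1)%N) A))%E.

Definition is_topology_on (T : Type) (X : set T) (O : set (set T)) : Prop :=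
  [/\ O X, O set0, (forall U, O U -> U `<=` X),
      (forall U V, O U -> O V -> O (U `&` V)) &
      (forall F : set (set T), F `<=` O -> O (\bigcup_(U in F) U))].

Definition weak_subbase (Th : set R) : set (set (probability R R)) :=
  [set U | exists (f : R -> R) (V : set R),
     [/\ (exists M : R, forall x, Th x -> `|f x| <= M),
         {within Th, continuous f}, open V &
         U = [set Q | PTheta Th Q /\ V (fine (\int[Q]_(x in Th) (f x)%:E))]]].

Definition weak_open (Th : set R) (U : set (probability R R)) : Prop :=
  forall O, is_topology_on (PTheta Th) O -> weak_subbase Th `<=` O -> O U.

Definition weak_borel (Th : set R) : set (set (probability R R)) :=
  <<s PTheta Th, weak_open Th >>.

Definition Pp (Th : set R) (p : R) : set (probability R R) :=
  [set Q | PTheta Th Q /\ (\int[Q]_(x in Th) (`|x| `^ p)%:E < +oo)%E].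

Definition couplings (mu nu : probability R R) : set (probability (R * R)%type R) :=
  [set pi | forall A : set R, measurable A ->
     pi (A `*` setT) = mu A /\ pi (setT `*` A) = nu A].

Definition Wp (p : R) (mu nu : probability R R) : R :=
  (fine (ereal_inf [set (\int[pi]_z (`|z.1 - z.2| `^ p)%:E)%E
                   | pi in couplings mu nu])) `^ p^-1.

Definition Wp_open (Th : set R) (p : R) (U : set (probability R R)) : Prop :=
  U `<=` Pp Th p /\
  forall mu, U mu -> exists2 e : R, 0 < e &
    forall nu, Pp Th p nu -> Wp p mu nu < e -> U nu.

Definition Wp_borel (Th : set R) (p : R) : set (set (probability R R)) :=
  <<s Pp Th p, Wp_open Th p >>.

Definition condp (H : probability R R) (B I : set R) : R :=
  fine (H (B `&` I)) / fine (H I).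

(* M : Omega -> array, M w j l = mu_{j,l}(w) for 1 <= j <= n+1, 1 <= l <= 2^j-1,
   is a random array distributed as DSBA(n, H) on the probability space P:
   - the entries are random variables, with mu_{j,2l} = mu_{j-1,l};
   - each new entry mu_{j,2l-1} lies in (mu_{j-1,l-1}, mu_{j-1,l}] (it is sampled
     from a law conditioned to that interval);
   - mu_{1,1} ~ H_{1,1};
   - for j = 2..n+1, given row j-1 (which contains all previous rows), the
     entries mu_{j,2l-1} are independent with laws H_{j,2l-1} conditioned to
     (mu_{j-1,l-1}, mu_{j-1,l}]; this is expressed on the generating
     pi-system of measurable rectangles. *)
Definition is_DSBA (d : measure_display) (Omega : measurableType d)
  (P : probability Omega R) (Th : set R) (n : nat)
  (H : nat -> nat -> probability R R) (M : Omega -> nat -> nat -> R) : Prop :=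
  [/\ (forall j l, (1 <= j <= n.+1)%N -> (1 <= l <= 2 ^ j - 1)%N ->
         measurable_fun setT (fun w => M w j l)),
      (forall w j l, (2 <= j <= n.+1)%N -> (1 <= l <= 2 ^ j.-1 - 1)%N ->
         M w j (2 * l)%N = M w j.-1 l),
      (forall w j k, (1 <= j <= n.+1)%N -> (1 <= k <= 2 ^ j.-1)%N ->
         ocI (ext_entry Th (M w) j.-1 k.-1) (ext_entry Th (M w) j.-1 k)
             (M w j (2 * k - 1)%N)),
      (forall B : set R, measurable B ->
         P [set w | B (M w 1%N 1%N)] = H 1%N 1%N B) &
      (forall j, (2 <= j <= n.+1)%N -> forall A B : nat -> set R,
         (forall l, measurable (A l)) -> (forall k, measurable (B k)) ->
         P [set w | (forall l, (1 <= l <= 2 ^ j.-1 - 1)%N -> A l (M w j.-1 l)) /\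
                    (forall k, (1 <= k <= 2 ^ j.-1)%N -> B k (M w j (2 * k - 1)%N))]
         = (\int[P]_w
              ((\prod_(1 <= l < 2 ^ j.-1) \1_(A l) (M w j.-1 l)) *
               \prod_(1 <= k < (2 ^ j.-1).+1)
                  condp (H j (2 * k - 1)%N) (B k)
                    (ocI (ext_entry Th (M w) j.-1 k.-1) (ext_entry Th (M w) j.-1 k)))%:E)%E)].

End Defs.

(* Main.v *)
Require Import Defs.
From HB Require Import structures.
From mathcomp Require Import all_boot all_order all_algebra.
From mathcomp Require Import all_classical all_reals all_analysis.
From mathcomp Require Import measurable_realfun.
Import Order.TTheory GRing.Theory Num.Theory.
Import numFieldNormedType.Exports.
Local Open Scope classical_set_scope.
Local Open Scope ring_scope.
Set Implicit Arguments. Unset Strict Implicit. Unset Printing Implicit Defensive.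
From mathcomp Require Import zify ring lra.

Section Struct.
Variable R : realType.
Implicit Types (Th : set R) (m : nat -> nat -> R).

Lemma Fv0 m n : Fv m n 0 = 0.
Proof. by case: n. Qed.

Lemma pow2_neq0 n : (2 ^ n == 0)%N = false.
Proof. by apply/negbTE; rewrite -lt0n expn_gt0. Qed.

Lemma FvK m n : Fv m n (2 ^ n) = 1.
Proof. by case: n => [//|n] /=; rewrite pow2_neq0 eqxx. Qed.

Lemma sum_wgt m n : \sum_(1 <= l < (2 ^ n).+1) wgt m n l = 1.
Proof.
rewrite big_add1 /= (@telescope_sumr_eq _ 0 (2 ^ n) (Fv m n)) //.
  by rewrite FvK Fv0 subr0.
by move=> k _; rewrite /wgt subn1.
Qed.

Definition atom m n k := m n.+1 (2 * k - 1)%N.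

Variables (Th : set R) (m : nat -> nat -> R) (n : nat).
Hypothesis H3 : forall k, (1 <= k <= 2 ^ n)%N ->
  ocI (ext_entry Th m n k.-1) (ext_entry Th m n k) (m n.+1 (2 * k - 1)%N).

Lemma atom_lt k : (1 <= k)%N -> (k < 2 ^ n)%N -> atom m n k < atom m n k.+1.
Proof.
move=> k1 kn.
have [_ h1] := H3 (k := k) ltac:(by rewrite k1 (ltnW kn)).
have [h2 _] := H3 (k := k.+1) ltac:(by rewrite kn).
by rewrite -lte_fin; apply: le_lt_trans h1 h2.
Qed.

Lemma atom_lt2 i j : (1 <= i)%N -> (i < j)%N -> (j <= 2 ^ n)%N ->
  atom m n i < atom m n j.
Proof.
move=> i1; elim: j => // j IH; rewrite ltnS leq_eqVlt => /orP[/eqP <-|ij] jn.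
  by apply: atom_lt => //.
apply: lt_trans (IH ij (ltnW jn)) _; apply: atom_lt => //.
exact: leq_trans i1 (ltnW ij).
Qed.

Lemma atom_inj i j : (1 <= i <= 2 ^ n)%N -> (1 <= j <= 2 ^ n)%N ->
  atom m n i = atom m n j -> i = j.
Proof.
move=> /andP[i1 i2] /andP[j1 j2] e.
case: (ltngtP i j) => // h.
- by move: (atom_lt2 i1 h j2); rewrite e ltxx.
- by move: (atom_lt2 j1 h i2); rewrite e ltxx.
Qed.

Lemma atom_le i j : (1 <= i)%N -> (i <= j)%N -> (j <= 2 ^ n)%N ->
  atom m n i <= atom m n j.
Proof.
move=> i1; rewrite leq_eqVlt => /orP[/eqP->//|ij] jn.
exact/ltW/atom_lt2.
Qed.

Lemma atom_bounds k : (1 <= k <= 2 ^ n)%N ->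
  (infTh Th < (atom m n k)%:E)%E /\ ((atom m n k)%:E <= supTh Th)%E.
Proof.
move=> /andP[k1 kn]; split.
  have [h _] := H3 (k := 1) ltac:(by rewrite leqnn expn_gt0).
  move: h; rewrite /ext_entry /= => h.
  apply: lt_le_trans h _; rewrite lee_fin; exact: atom_le.
have [_ h] := H3 (k := 2 ^ n) ltac:(by rewrite expn_gt0 leqnn).
move: h; rewrite /ext_entry pow2_neq0 eqxx => h.
apply: le_trans h; rewrite lee_fin; exact: atom_le.
Qed.

End Struct.

Lemma inTh (R : realType) (Th : set R) x : is_Theta Th ->
  (infTh Th < x%:E)%E -> (x%:E <= supTh Th)%E -> Th x.
Proof.
have infP a : Th = [set x | a <= x] -> (a%:E <= infTh Th)%E.
  move=> ->; apply/ereal_infP => _ [y /= ay <-]; by rewrite lee_fin.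
have supP a : Th = [set x | x <= a] -> (supTh Th <= a%:E)%E.
  move=> ->; apply/ereal_supP => _ [y /= ay <-]; by rewrite lee_fin.
case=> [->//|[[a Ha]|[[a Ha]|[a [b [ab Ha]]]]]] hi hs.
- rewrite Ha /=; have := le_lt_trans (infP a Ha) hi; rewrite lte_fin => /ltW //.
- rewrite Ha /=; have := le_trans hs (supP a Ha); rewrite lee_fin //.
- have hi' : (a%:E <= infTh Th)%E.
    rewrite Ha; apply/ereal_infP => _ [y /= /andP[ay _] <-]; by rewrite lee_fin.
  have hs' : (supTh Th <= b%:E)%E.
    rewrite Ha; apply/ereal_supP => _ [y /= /andP[_ yb] <-]; by rewrite lee_fin.
  rewrite Ha /=; apply/andP; split.
    by have := le_lt_trans hi' hi; rewrite lte_fin => /ltW.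
  by have := le_trans hs hs'; rewrite lee_fin.
Qed.

Section Atomic.
Context d (T : measurableType d) (R : realType).

Lemma max0_ge0 (r : R) : 0 <= Num.max r 0.
Proof. by rewrite le_max lexx orbT. Qed.

Lemma maxB (x : R) : Num.max x 0 - Num.max (- x) 0 = x.
Proof.
rewrite !maxEle; case: (leP x 0) => hx; case: (leP (-x) 0) => hy.
- by apply/eqP; rewrite subr0 eq_le hx -oppr_le0 hy.
- by rewrite sub0r opprK.
- by rewrite subr0.
- by move: hy; rewrite oppr_gt0 => /(lt_trans hx); rewrite ltxx.
Qed.

Definition nnp (r : R) : {nonneg R} := NngNum (max0_ge0 r).

Definition atomm (a : nat -> T) (c : nat -> R) (N : nat) : {measure set T -> \bar R} :=
  msum (fun i => mscale (nnp (c i)) (\d_(a i))) N.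

Variables (a : nat -> T) (c : nat -> R) (N : nat).

Lemma atommE A : atomm a c N A = \sum_(i < N) ((Num.max (c i) 0)%:E * \d_(a i) A)%E.
Proof. by []. Qed.

Lemma atomm_ge0_int D (f : T -> \bar R) : measurable D -> measurable_fun D f ->
  (forall x, D x -> (0 <= f x)%E) ->
  (\int[atomm a c N]_(x in D) f x =
   \sum_(i < N) ((Num.max (c i) 0)%:E * (\d_(a i) D * f (a i))))%E.
Proof.
move=> mD mf f0; rewrite ge0_integral_measure_sum //; apply: eq_bigr => i _.
by rewrite ge0_integral_mscale // integral_dirac.
Qed.

Lemma atomm_int D (g : T -> R) : measurable D -> measurable_fun D g ->
  (\int[atomm a c N]_(x in D) (g x)%:E =
   (\sum_(i < N) Num.max (c i) 0 * ((a i \in D)%:R * g (a i)))%:E)%E.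
Proof.
move=> mD mg; rewrite integralE.
have mgE : measurable_fun D (EFin \o g) by exact/measurable_EFinP.
rewrite !atomm_ge0_int //; try exact: (measurable_funeneg mgE);
  try exact: (measurable_funepos mgE).
under eq_bigr do rewrite diracE funeposE -EFin_max -!EFinM.
under [X in (_ - X)%E]eq_bigr do rewrite diracE funenegE -EFin_max -!EFinM.
rewrite !sumEFin -EFinB -sumrB; congr EFin; apply: eq_bigr => i _.
rewrite -mulrBr -mulrBr; congr (_ * (_ * _)).
exact: maxB.
Qed.

End Atomic.
Lemma maxr0_id (R : realType) (x : R) : 0 <= x -> Num.max x 0 = x.
Proof. by move=> hx; rewrite maxEle; case: leP => // h; apply/eqP; rewrite eq_le hx h. Qed.

Section Rep.
Variable R : realType.
Variables (mu : {measure set R -> \bar R}) (a : nat -> R) (c : nat -> R) (N : nat).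
Hypothesis hrep : forall A, measurable A ->
  mu A = \sum_(i < N) ((c i)%:E * \d_(a i) A)%E.
Hypothesis hinj : forall i j, (i < N)%N -> (j < N)%N -> a i = a j -> i = j.

Lemma rep_set1 i : (i < N)%N -> mu [set a i] = (c i)%:E.
Proof.
move=> iN; rewrite hrep ?measurable_set1 // (bigD1 (Ordinal iN)) //=.
rewrite big1 ?adde0 ?diracE ?mem_set ?mule1 //.
move=> j ji; rewrite diracE memNset ?mule0 // => /= eq; move/eqP: ji; apply.
by apply/val_inj => /=; apply: hinj.
Qed.

Lemma rep_ge0 i : (i < N)%N -> 0 <= c i.
Proof. by move=> iN; rewrite -lee_fin -rep_set1. Qed.

Lemma rep_atomm A : measurable A -> mu A = atomm a c N A.
Proof.
move=> mA; rewrite hrep // atommE; apply: eq_bigr => i _.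
by rewrite maxr0_id // rep_ge0.
Qed.

Lemma rep_int D (g : R -> R) : measurable D -> measurable_fun D g ->
  (\int[mu]_(x in D) (g x)%:E =
   (\sum_(i < N) c i * ((a i \in D)%:R * g (a i)))%:E)%E.
Proof.
move=> mD mg; rewrite (eq_measure_integral (atomm a c N)); last first.
  by move=> A mA _; exact: rep_atomm.
rewrite atomm_int //; congr EFin; apply: eq_bigr => i _.
by rewrite maxr0_id // rep_ge0.
Qed.

Lemma rep_sum1 : mu setT = 1%E -> \sum_(i < N) c i = 1.
Proof.
move=> h; apply/EFin_inj; rewrite -sumEFin -h hrep //.
by apply: eq_bigr => i _; rewrite diracE mem_set // mule1.
Qed.

Lemma rep_le1 i : mu setT = 1%E -> (i < N)%N -> c i <= 1.
Proof.
move=> h iN; rewrite -rep_sum1 // (bigD1 (Ordinal iN)) //= lerDl.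
by apply: sumr_ge0 => j _; apply: rep_ge0.
Qed.

End Rep.

Section AtomP.
Context d (T : measurableType d) (R : realType).
Definition atomp (a : nat -> T) (c : nat -> R) N (P0 : probability T R) :
  probability T R := mnormalize (atomm a c N) P0.

Lemma atompE a c N P0 : atomm a c N setT = 1%E ->
  forall A, atomp a c N P0 A = atomm a c N A.
Proof.
move=> h A; rewrite /atomp /= /mnormalize /= h /=.
case: ifPn => [/orP[]|_]; [by rewrite eqe oner_eq0|by []|].
by rewrite /= invr1 mule1.
Qed.
End AtomP.

Section LP.
Context d (Omega : measurableType d) (R : realType).
Variables (g : nat -> Omega -> R) (N : nat).
Hypothesis mg : forall i, (i < N)%N -> measurable_fun setT (g i).

Definition LPopen (S : set Omega) := forall w, S w -> exists2 e : R, 0 < e &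
  forall w', (forall i, (i < N)%N -> `|g i w' - g i w| < e) -> S w'.

Definition box (q : seq rat) (r : rat) : set Omega :=
  [set w | forall i, (i < N)%N -> `|g i w - ratr (nth 0 q i)| < ratr r].

Lemma box_measurable q r : measurable (box q r).
Proof.
rewrite (_ : box q r = \bigcap_i (if (i < N)%N then
    g i @^-1` `](ratr (nth 0 q i) - ratr r), (ratr (nth 0 q i) + ratr r)[
    else setT)).
  apply: bigcapT_measurable => i; case: ifP => iN; last exact: measurableT.
  by rewrite -[X in measurable X]setTI; apply: mg => //; exact: measurable_itv.
apply/seteqP; split=> [w /= h i _|w /= h i iN].
  by case: ifP => // iN; rewrite /= in_itv /= -ltr_distlC distrC h.
by have := h i I; rewrite iN /= in_itv /= -ltr_distlC distrC.
Qed.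

Lemma LPopen_measurable S : LPopen S -> measurable S.
Proof.
move=> hS.
pose B (k : seq rat * rat) : set Omega :=
  if pselect (box k.1 k.2 `<=` S) is left _ then box k.1 k.2 else set0.
rewrite (_ : S = \bigcup_k B k).
  apply: countable_bigcupT_measurable; first exact: countableP.
  move=> k; rewrite /B; case: pselect => _ //; exact: box_measurable.
apply/seteqP; split; last first.
  by move=> w [k _]; rewrite /B; case: pselect => // h /h.
move=> w Sw; have [e e0 he] := hS w Sw.
have [r] := @rat_in_itvoo R 0 (e / 2) ltac:(by rewrite divr_gt0).
rewrite in_itv /= => /andP[r0 re].
have /choice[f hf] : forall i, exists q : rat,
    ratr q \in `](g i w - ratr r), (g i w + ratr r)[.
  by move=> i; apply: rat_in_itvoo; rewrite ltrBlDr -addrA ltrDl addr_gt0.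
exists (mkseq f N, r) => //; rewrite /B /=.
have wbox : box (mkseq f N) r w.
  move=> i iN; rewrite nth_mkseq //.
  by have := hf i; rewrite in_itv /= -ltr_distlC.
case: pselect => // -[]; move=> w' hw'; apply: he => i iN.
have := hw' i iN; have := wbox i iN; rewrite nth_mkseq // => h1 h2.
rewrite (_ : g i w' - g i w = (g i w' - ratr (f i)) - (g i w - ratr (f i)));
  last by rewrite opprB addrA subrK.
apply: le_lt_trans (ler_normB _ _) _.
rewrite (splitr e); apply: ltrD; exact: lt_trans re.
Qed.

End LP.

Lemma inv_meas (R : realType) : measurable_fun [set: R] (@GRing.inv R).
Proof.
have mC : measurable (~` [set (0:R)]) := measurableC (measurable_set1 (0:R)).
rewrite (_ : setT = [set 0] `|` ~` [set 0]); last by rewrite setUv.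
apply/(measurable_funU _ (measurable_set1 (0:R)) mC).
split; first exact: measurable_fun_set1.
apply: open_continuous_measurable_fun.
  by apply: closed_openC; exact: closed_eq.
move=> x; rewrite inE /= => /eqP x0; exact: inv_continuous.
Qed.

Section FvMeas.
Context d (Omega : measurableType d) (R : realType).

Lemma ratio01_meas (f h : Omega -> R) : measurable_fun setT f ->
  measurable_fun setT h -> measurable_fun setT (fun w => ratio01 (f w) (h w)).
Proof.
move=> mf mh; rewrite /ratio01; apply: measurable_fun_ifT.
- by apply: measurable_fun_eqr => //; exact: measurable_cst.
- exact: measurable_cst.
- by apply: measurable_funM => //; exact: measurableT_comp (@inv_meas R) mh.
Qed.

Variables (M : Omega -> nat -> nat -> R) (n : nat).
Hypothesis hM : forall j l, (1 <= j <= n.+1)%N -> (1 <= l <= 2 ^ j - 1)%N ->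
  measurable_fun setT (fun w => M w j l).

Lemma Fv_meas j : (j <= n)%N -> forall l, (l <= 2 ^ j)%N ->
  measurable_fun setT (fun w => Fv (M w) j l).
Proof.
elim: j => [|j IH] jn l ll.
  by rewrite /=; case: (l == 0)%N; exact: measurable_cst.
rewrite /=; case: eqP => l0; first exact: measurable_cst.
case: eqP => l2; first exact: measurable_cst.
have jn' : (j <= n)%N by apply: ltnW.
have e2 : (2 ^ j.+1 = 2 * 2 ^ j)%N by rewrite expnS.
have e4 : (2 ^ j.+2 = 4 * 2 ^ j)%N by rewrite !expnS mulnA.
case lo: (odd l).
  set k := uphalf l.
  have lk : (l.+1 = 2 * k)%N.
    by rewrite /k -[LHS]odd_double_half /= lo /= -mul2n.
  have hk1 : (1 <= k)%N by lia.
  have hk2 : (k <= 2 ^ j)%N.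
    have : (l < 2 ^ j.+1)%N by rewrite ltn_neqAle ll andbT; apply/eqP.
    lia.
  have mM r : (1 <= r <= 3)%N ->
      measurable_fun setT (fun w => M w j.+2 (4 * k - r)%N).
    move=> hr; apply: hM; first by lia.
    rewrite e4; lia.
  apply: measurable_funD; first by apply: IH => //; lia.
  apply: measurable_funM.
    by apply: measurable_funB; apply: IH => //; lia.
  by apply: ratio01_meas; apply: measurable_funB; apply: mM.
apply: IH => //.
by have := half_leq ll; rewrite e2 mul2n doubleK.
Qed.

End FvMeas.
Lemma within_eps (R : realType) (Th : set R) (f : R -> R) x :
  {within Th, continuous f} -> Th x -> forall e : R, 0 < e ->
  exists2 h : R, 0 < h & forall y, Th y -> `|y - x| < h -> `|f y - f x| < e.
Proof.
move=> /subspace_continuousP cf Tx e e0.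
have := cf x Tx; move=> /cvgrPdist_lt /(_ e e0).
move=> /nbhs_ballP [h h0 hb]; exists h => // y Ty yx.
rewrite distrC; apply: (hb y) => //.
by rewrite /ball /= distrC.
Qed.

Lemma fin_min (R : realType) (P : nat -> R -> Prop) N :
  (forall i, (i < N)%N -> exists2 e : R, 0 < e & P i e) ->
  (forall i e e', 0 < e' -> e' <= e -> P i e -> P i e') ->
  exists2 e : R, 0 < e & forall i, (i < N)%N -> P i e.
Proof.
move=> h mono; elim: N h => [|N IH] h; first by exists 1.
have [e1 e10 he1] := IH (fun i iN => h i (ltnW iN)).
have [e2 e20 he2] := h N (ltnSn N).
exists (Num.min e1 e2); first by rewrite lt_min e10 e20.
move=> i; rewrite ltnS leq_eqVlt => /orP[/eqP->|iN].
  by apply: mono he2; [rewrite lt_min e10 e20|rewrite ge_min lexx orbT].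
by apply: mono (he1 i iN); [rewrite lt_min e10 e20|rewrite ge_min lexx].
Qed.

Lemma sum_cont (R : realType) (Th : set R) (f : R -> R) (B : R) N (a c : nat -> R) :
  (forall x, Th x -> `|f x| <= B) -> {within Th, continuous f} ->
  (forall i, (i < N)%N -> Th (a i)) ->
  forall e : R, 0 < e -> exists2 h : R, 0 < h & forall a' c' : nat -> R,
    (forall i, (i < N)%N -> Th (a' i)) -> (forall i, (i < N)%N -> `|c' i| <= 1) ->
    (forall i, (i < N)%N -> `|a' i - a i| < h /\ `|c' i - c i| < h) ->
    `|\sum_(i < N) c' i * f (a' i) - \sum_(i < N) c i * f (a i)| < e.
Proof.
move=> hB cf ha e e0.
pose Bp := `|B|.
have B1 : 0 < Bp + 1 by rewrite /Bp; have := normr_ge0 B; lra.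
have hB' x : Th x -> `|f x| <= Bp by move=> Tx; apply: le_trans (hB x Tx) (ler_norm B).
pose e1 := e / (2 * N.+1%:R).
have e10 : 0 < e1 by rewrite divr_gt0 // mulr_gt0.
have [h h0 hh] := @fin_min R (fun i h => forall y, Th y -> `|y - a i| < h ->
    `|f y - f (a i)| < e1) N
  (fun i iN => within_eps cf (ha i iN) e10)
  (fun i h h' h'0 hh' P y Ty yh => P y Ty (lt_le_trans yh hh')).
exists (Num.min h (e1 / (Bp + 1))).
  by rewrite lt_min h0 divr_gt0.
move=> a' c' ha' hc' hd.
rewrite -sumrB; apply: le_lt_trans (ler_norm_sum _ _ _) _.
apply: (@le_lt_trans _ _ (\sum_(i < N) (e1 + e1))).
  apply: ler_sum => i _; have [d1 d2] := hd i (ltn_ord i).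
  rewrite (_ : _ - _ = c' i * (f (a' i) - f (a i)) + (c' i - c i) * f (a i));
    last by rewrite mulrBr mulrBl addrA subrK.
  apply: le_trans (ler_normD _ _) _; apply: lerD.
    rewrite normrM -[e1]mul1r; apply: ler_pM => //; first exact: hc'.
    apply/ltW/hh => //; first exact: ha'.
    by apply: lt_le_trans d1 _; rewrite ge_min lexx.
  rewrite normrM; apply: le_trans (_ : e1 / (Bp + 1) * Bp <= _).
    apply: ler_pM => //; last exact/hB'/ha.
    by apply/ltW/(lt_le_trans d2); rewrite ge_min lexx orbT.
  rewrite mulrAC ler_pdivrMr // ler_pM2l //; lra.
have hN : 0 < N.+1%:R :> R by rewrite ltr0n.
rewrite sumr_const card_ord -mulr_natr.
have -> : (e1 + e1) * N%:R = e * N%:R / N.+1%:R.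
  rewrite /e1; field; apply: lt0r_neq0; have := ler0n R N; lra.
by rewrite (ltr_pdivrMr e (e * N%:R) hN) ltr_pM2l // ltr_nat.
Qed.
Section Topo.
Context d (Omega : measurableType d) (R : realType) (P : Type).
Variables (g : nat -> Omega -> R) (N : nat) (Gf : Omega -> P) (X : set P).
Hypothesis GX : forall w, X (Gf w).

Definition OG := [set U : set P | U `<=` X /\ LPopen g N (Gf @^-1` U)].

Lemma OG_top : is_topology_on X OG.
Proof.
split.
- split => // w _; exists 1 => // w' _; exact: GX.
- by split => // w [].
- by move=> U [].
- move=> U V [UX hU] [_ hV]; split; first by move=> x [/UX].
  move=> w [Uw Vw]; have [e1 e10 h1] := hU w Uw; have [e2 e20 h2] := hV w Vw.
  exists (Num.min e1 e2); first by rewrite lt_min e10 e20.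
  move=> w' h; split; [apply: h1|apply: h2] => i iN;
    apply: lt_le_trans (h i iN) _; rewrite ge_min lexx ?orbT //.
- move=> F FO; split; first by move=> x [U FU Ux]; exact: (FO U FU).1 _ Ux.
  move=> w [U FU Uw]; have [e e0 he] := (FO U FU).2 w Uw.
  by exists e => // w' h; exists U => //; exact: he.
Qed.

Lemma borel_pre (O : set (set P)) :
  (forall U, O U -> measurable (Gf @^-1` U)) ->
  forall B, <<s X, O>> B -> measurable (Gf @^-1` B).
Proof.
move=> hO B hB.
have : <<s X, O>> `<=` [set B | measurable (Gf @^-1` B)].
  apply: smallest_sub => //; split => /=.
  - by rewrite preimage_set0.
  - move=> A mA; rewrite (_ : Gf @^-1` (X `\` A) = ~` (Gf @^-1` A)).
      exact: measurableC.
    by apply/seteqP; split => w /=; [case|move=> h; split; [exact: GX|]].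
  - by move=> A mA; rewrite preimage_bigcup; exact: bigcupT_measurable.
by apply.
Qed.

End Topo.
Lemma sum_divmod (V : zmodType) (F : nat -> nat -> V) N M :
  \sum_(k < N * M) F (k %/ M)%N (k %% M)%N = \sum_(i < N) \sum_(j < M) F i j.
Proof.
elim: N => [|N IH]; first by rewrite mul0n !big_ord0.
rewrite mulSnr big_split_ord /= IH big_ord_recr /=; congr (_ + _).
apply: eq_bigr => j _ /=.
have M0 : (0 < M)%N by case: j => j /= /(leq_ltn_trans (leq0n j)).
by rewrite divnMDl // modnMDl divn_small // modn_small // addn0.
Qed.

Section Coupling.
Variable R : realType.
Variables (N : nat) (c c' : nat -> R).
Hypotheses (c0 : forall i, (i < N)%N -> 0 <= c i)
  (c'0 : forall i, (i < N)%N -> 0 <= c' i)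
  (cs : \sum_(i < N) c i = 1) (c's : \sum_(i < N) c' i = 1).

Definition mm i := Num.min (c i) (c' i).
Definition rr := \sum_(i < N) (c i - mm i).
Definition wt i j := (i == j)%:R * mm i + (c i - mm i) * (c' j - mm j) / rr.

Lemma mm_le i : mm i <= c i /\ mm i <= c' i.
Proof. by split; rewrite /mm ge_min lexx ?orbT. Qed.

Lemma mm_ge0 i : (i < N)%N -> 0 <= mm i.
Proof. by move=> iN; rewrite /mm le_min c0 ?c'0. Qed.

Lemma rr' : \sum_(j < N) (c' j - mm j) = rr.
Proof. by rewrite /rr !sumrB cs c's. Qed.

Lemma rr_ge0 : 0 <= rr.
Proof. by apply: sumr_ge0 => i _; rewrite subr_ge0 (mm_le i).1. Qed.

Lemma rr0 : rr = 0 -> forall i, (i < N)%N -> c i - mm i = 0 /\ c' i - mm i = 0.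
Proof.
move=> h i iN; split.
  have := @psumr_eq0P _ _ xpredT (fun i : 'I_N => c i - mm i).
  move=> /(_ (fun j _ => ltac:(by rewrite subr_ge0 (mm_le j).1)) h (Ordinal iN)).
  exact.
have := @psumr_eq0P _ _ xpredT (fun i : 'I_N => c' i - mm i).
move=> /(_ (fun j _ => ltac:(by rewrite subr_ge0 (mm_le j).2))).
by rewrite rr' => /(_ h (Ordinal iN)); exact.
Qed.

Lemma wt_ge0 i j : (i < N)%N -> (j < N)%N -> 0 <= wt i j.
Proof.
move=> iN jN; apply: addr_ge0; first by rewrite mulr_ge0 ?ler0n ?mm_ge0.
apply: divr_ge0; last exact: rr_ge0.
by rewrite mulr_ge0 // subr_ge0 ?(mm_le i).1 ?(mm_le j).2.
Qed.

Lemma sum_delta (F : nat -> R) i : (i < N)%N ->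
  \sum_(j < N) (i == j)%:R * F j = F i.
Proof.
move=> iN; rewrite (bigD1 (Ordinal iN)) //= eqxx mul1r big1 ?addr0 //.
move=> j ji; suff -> : (i == j :> nat) = false by rewrite mul0r.
by apply/eqP => h; move/eqP: ji; apply; apply/val_inj.
Qed.

Lemma sum_delta' (F : nat -> R) j : (j < N)%N ->
  \sum_(i < N) (i == j :> nat)%:R * F i = F j.
Proof.
move=> jN; rewrite (bigD1 (Ordinal jN)) //= eqxx mul1r big1 ?addr0 //.
move=> i ij; suff -> : (i == j :> nat) = false by rewrite mul0r.
by apply/eqP => h; move/eqP: ij; apply; apply/val_inj.
Qed.

Lemma wt_row i : (i < N)%N -> \sum_(j < N) wt i j = c i.
Proof.
move=> iN; rewrite big_split /=.
rewrite (eq_bigr (fun j : 'I_N => (i == j)%:R * mm i)) //.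
rewrite (@sum_delta (fun=> mm i)) //.
rewrite -mulr_suml -mulr_sumr rr'.
have [r0|r0] := eqVneq rr 0.
  by rewrite r0 mulr0 mul0r addr0; have [/eqP] := rr0 r0 iN; rewrite subr_eq0 => /eqP.
by rewrite mulfK // addrC subrK.
Qed.

Lemma wt_col j : (j < N)%N -> \sum_(i < N) wt i j = c' j.
Proof.
move=> jN; rewrite big_split /=.
rewrite (@sum_delta' mm) //.
rewrite -mulr_suml -mulr_suml -/rr.
have [r0|r0] := eqVneq rr 0.
  by rewrite r0 mul0r mul0r addr0; have [_ /eqP] := rr0 r0 jN; rewrite subr_eq0 => /eqP.
by rewrite mulrC mulrA mulVf // mul1r addrC subrK.
Qed.

Lemma wt_sum : \sum_(i < N) \sum_(j < N) wt i j = 1.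
Proof. by rewrite -cs; apply: eq_bigr => i _; rewrite wt_row. Qed.

Lemma cost_bound (a a' : nat -> R) (p e Dp : R) : 1 <= p -> 0 < e -> e <= 1 ->
  0 <= Dp ->
  (forall i, (i < N)%N -> `|a' i - a i| < e) ->
  (forall i, (i < N)%N -> `|c' i - c i| < e) ->
  (forall i j, (i < N)%N -> (j < N)%N -> `|a i - a' j| `^ p <= Dp) ->
  \sum_(i < N) \sum_(j < N) wt i j * `|a i - a' j| `^ p <= e + N%:R * e * Dp.
Proof.
move=> p1 e0 e1 D0 hd hc hD.
under eq_bigr do under eq_bigr do rewrite mulrDl.
under eq_bigr do rewrite big_split /=.
rewrite big_split /=; apply: lerD.
  rewrite (eq_bigr (fun i : 'I_N => mm i * `|a i - a' i| `^ p)); last first.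
    move=> i _; rewrite -(@sum_delta (fun j => mm i * `|a i - a' j| `^ p)) //.
    by apply: eq_bigr => j _; rewrite mulrA.
  apply: (@le_trans _ _ (\sum_(i < N) c i * e)); last by rewrite -mulr_suml cs mul1r.
  apply: ler_sum => i _; apply: ler_pM; rewrite ?mm_ge0 ?powR_ge0 //.
    exact: (mm_le i).1.
  have hi := hd i (ltn_ord i); rewrite distrC in hi.
  have [->|x0] := eqVneq `|a i - a' i| 0.
    by rewrite powR0 ?ltW // gt_eqF // (lt_le_trans ltr01 p1).
  apply: le_trans (ltW hi); apply: ge1r_powR => //.
  by rewrite lt0r x0 normr_ge0 /= (le_trans (ltW hi) e1).
apply: (@le_trans _ _ (\sum_(i < N) \sum_(j < N)
     ((c i - mm i) * (c' j - mm j) / rr * Dp))).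
  apply: ler_sum => i _; apply: ler_sum => j _; apply: ler_pM => //.
    apply: divr_ge0; last exact: rr_ge0.
    by rewrite mulr_ge0 // subr_ge0 ?(mm_le i).1 ?(mm_le j).2.
  exact: hD.
under eq_bigr do rewrite -mulr_suml -mulr_suml -mulr_sumr rr'.
rewrite -mulr_suml -mulr_suml -/rr -mulr_suml -/rr.
apply: (@le_trans _ _ (rr * Dp)).
  apply: ler_pM => //.
    by rewrite divr_ge0 ?mulr_ge0 ?rr_ge0.
  have [r0|r0] := eqVneq rr 0; first by rewrite r0 mulr0 mul0r.
  by rewrite mulfK.
apply: ler_wpM2r => //; rewrite /rr.
apply: (@le_trans _ _ (\sum_(i < N) e)); last by rewrite sumr_const card_ord mulr_natl.
apply: ler_sum => i _; rewrite /mm minEle; case: (leP (c i) (c' i)) => h.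
  by rewrite subrr ltW.
by apply: ltW; apply: le_lt_trans (hc i (ltn_ord i)); rewrite distrC ler_norm.
Qed.

End Coupling.
Section CouplingMeasure.
Variable R : realType.
Variables (N : nat) (a c a' c' : nat -> R).
Hypotheses (c0 : forall i, (i < N)%N -> 0 <= c i)
  (c'0 : forall i, (i < N)%N -> 0 <= c' i)
  (cs : \sum_(i < N) c i = 1) (c's : \sum_(i < N) c' i = 1).

Definition cpts k : (R * R)%type := (a (k %/ N)%N, a' (k %% N)%N).
Definition cwt k := wt N c c' (k %/ N)%N (k %% N)%N.
Definition cplm := atomm cpts cwt (N * N).

Lemma cplm_E S : cplm S =
  (\sum_(i < N) \sum_(j < N) wt N c c' i j * (((a i, a' j) \in S))%:R)%:E.
Proof.
rewrite /cplm atommE; under eq_bigr do rewrite diracE -EFinM.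
rewrite sumEFin; congr EFin.
rewrite (@sum_divmod _ (fun i j => Num.max (wt N c c' i j) 0 *
   (((a i, a' j) \in S))%:R)).
apply: eq_bigr => i _; apply: eq_bigr => j _.
by rewrite maxr0_id // wt_ge0.
Qed.

Lemma cplm_T : cplm setT = 1%E.
Proof.
rewrite cplm_E; congr EFin; rewrite -[RHS](wt_sum cs c's).
by apply: eq_bigr => i _; apply: eq_bigr => j _; rewrite in_setT /= mulr1n mulr1.
Qed.

Definition cpl : probability (R * R)%type R := atomp cpts cwt (N * N) (\d_(a 0, a' 0)).

Lemma cplE S : cpl S = cplm S.
Proof. exact: (atompE _ cplm_T). Qed.

Lemma cpl_marg1 A : cpl (A `*` setT) = (\sum_(i < N) c i * (a i \in A)%:R)%:E.
Proof.
rewrite cplE cplm_E; congr EFin; apply: eq_bigr => i _.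
under eq_bigr do rewrite in_setX /= in_setT andbT.
by rewrite -mulr_suml wt_row.
Qed.

Lemma cpl_marg2 A : cpl (setT `*` A) = (\sum_(j < N) c' j * (a' j \in A)%:R)%:E.
Proof.
rewrite cplE cplm_E exchange_big /=; congr EFin; apply: eq_bigr => j _.
under eq_bigr do rewrite in_setX /= in_setT.
by rewrite -mulr_suml wt_col.
Qed.

Lemma cpl_cost (p : R) : (\int[cpl]_z (`|z.1 - z.2| `^ p)%:E =
  (\sum_(i < N) \sum_(j < N) wt N c c' i j * `|a i - a' j| `^ p)%:E)%E.
Proof.
rewrite (eq_measure_integral cplm); last by move=> S _ _; exact: cplE.
rewrite atomm_int //; last first.
  apply: (measurableT_comp (measurable_powR p)).
  apply: (measurableT_comp (@normr_measurable R setT)).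
  by apply: measurable_funB; [exact: measurable_fst|exact: measurable_snd].
congr EFin.
rewrite (@sum_divmod _ (fun i j => Num.max (wt N c c' i j) 0 *
   (((a i, a' j) \in setT)%:R * `|a i - a' j| `^ p))).
apply: eq_bigr => i _; apply: eq_bigr => j _.
by rewrite maxr0_id ?wt_ge0 // in_setT /= mulr1n mul1r.
Qed.

End CouplingMeasure.

Lemma Wp_lt (R : realType) (p e C : R) (mu nu : probability R R)
    (pi : probability (R * R)%type R) :
  0 < p -> 0 < e -> couplings mu nu pi ->
  (\int[pi]_z (`|z.1 - z.2| `^ p)%:E = C%:E)%E -> C < e `^ p -> Wp p mu nu < e.
Proof.
move=> p0 e0 hpi hC Ce; rewrite /Wp.
set S := [set _ | _ in _].
have infC : (ereal_inf S <= C%:E)%E by apply: ereal_inf_lbound; exists pi.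
have inf0 : (0 <= ereal_inf S)%E.
  apply/ereal_infP => _ [pi' _ <-]; apply: integral_ge0 => z _.
  by rewrite lee_fin powR_ge0.
have fin : ereal_inf S \is a fin_num.
  by rewrite ge0_fin_numE // (le_lt_trans infC) ?ltey.
have h1 : fine (ereal_inf S) <= C by rewrite -lee_fin fineK.
have h0 : 0 <= fine (ereal_inf S) by rewrite fine_ge0.
have C0 : 0 <= C := le_trans h0 h1.
apply: (@le_lt_trans _ _ (C `^ p^-1)).
  by apply: ge0_ler_powR => //; rewrite ?invr_ge0 ?ltW // nnegrE.
have pi0 : 0 < p^-1 by rewrite invr_gt0.
have := @gt0_ltr_powR _ p^-1 pi0 C (e `^ p).
rewrite !nnegrE => /(_ C0 (powR_ge0 _ _) Ce).
by rewrite -powRrM mulfV ?gt_eqF // powRr1 ?ltW.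
Qed.
Lemma term_le_sum (R : realType) (F : nat -> R) N i : (forall j, (j < N)%N -> 0 <= F j) ->
  (i < N)%N -> F i <= \sum_(j < N) F j.
Proof.
move=> F0 iN; rewrite (bigD1 (Ordinal iN)) //= lerDl.
by apply: sumr_ge0 => j _; apply: F0.
Qed.

Lemma rep_real (R : realType) (mu : probability R R) (a c : nat -> R) N A :
  (forall A, measurable A -> mu A = \sum_(i < N) ((c i)%:E * \d_(a i) A)%E) ->
  measurable A -> mu A = (\sum_(i < N) c i * (a i \in A)%:R)%:E.
Proof.
move=> h mA; rewrite h // -sumEFin; apply: eq_bigr => i _.
by rewrite diracE -EFinM.
Qed.

Lemma Wp_cont (R : realType) (p : R) N (mu : probability R R) (a c : nat -> R) :
  1 <= p ->
  (forall A, measurable A -> mu A = \sum_(i < N) ((c i)%:E * \d_(a i) A)%E) ->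
  (forall i, (i < N)%N -> 0 <= c i) -> \sum_(i < N) c i = 1 ->
  forall e : R, 0 < e -> exists2 h : R, 0 < h & forall (nu : probability R R)
    (a' c' : nat -> R),
    (forall A, measurable A -> nu A = \sum_(i < N) ((c' i)%:E * \d_(a' i) A)%E) ->
    (forall i, (i < N)%N -> 0 <= c' i) -> \sum_(i < N) c' i = 1 ->
    (forall i, (i < N)%N -> `|a' i - a i| < h /\ `|c' i - c i| < h) ->
    Wp p mu nu < e.
Proof.
move=> p1 hmu c0 cs e e0.
have p0 : 0 < p by apply: lt_le_trans p1.
pose A0 := \sum_(i < N) `|a i|.
have A00 : 0 <= A0 by apply: sumr_ge0.
pose D1 := A0 + A0 + 1.
pose Dp := D1 `^ p.
have Dp0 : 0 <= Dp by apply: powR_ge0.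
have ep0 : 0 < e `^ p by apply: powR_gt0.
have K0 : 0 < 1 + N%:R * Dp by have := ler0n R N; have := mulr_ge0 (ler0n R N) Dp0; lra.
pose h := Num.min 1 (e `^ p / (2 * (1 + N%:R * Dp))).
have h0 : 0 < h by rewrite lt_min ltr01 divr_gt0 // mulr_gt0.
have h1 : h <= 1 by rewrite ge_min lexx.
have h2 : h <= e `^ p / (2 * (1 + N%:R * Dp)) by rewrite ge_min lexx orbT.
exists h => // nu a' c' hnu c'0 c's hd.
have hD : forall i j, (i < N)%N -> (j < N)%N -> `|a i - a' j| `^ p <= Dp.
  move=> i j iN jN.
  suff hle : `|a i - a' j| <= D1.
    apply: ge0_ler_powR; [exact: ltW|by rewrite nnegrE|rewrite nnegrE /D1; lra|exact: hle].
  apply: le_trans (ler_normB _ _) _.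
  have hi : `|a i| <= A0 by apply: (@term_le_sum _ (fun i => `|a i|)).
  have hj : `|a j| <= A0 by apply: (@term_le_sum _ (fun i => `|a i|)).
  have hj' : `|a' j| <= `|a j| + 1.
    have hlt := le_trans (ltW (hd j jN).1) h1.
    have := ler_normD (a' j - a j) (a j); rewrite subrK => hh; lra.
  rewrite /D1; lra.
apply: (@Wp_lt _ p e (\sum_(i < N) \sum_(j < N) wt N c c' i j * `|a i - a' j| `^ p)
  mu nu (cpl N a c a' c')) => //.
- move=> A mA; split.
    by rewrite cpl_marg1 // (rep_real hmu).
  by rewrite cpl_marg2 // (rep_real hnu).
- exact: cpl_cost.
apply: le_lt_trans.
  apply: (@cost_bound R N c c' c0 c'0 cs c's a a' p h Dp) => //.
  + by move=> i iN; exact: (hd i iN).1.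
  + by move=> i iN; exact: (hd i iN).2.
have -> : h + N%:R * h * Dp = h * (1 + N%:R * Dp) by rewrite mulrDr mulr1 mulrCA mulrA.
apply: (@le_lt_trans _ _ (e `^ p / 2)).
  rewrite -ler_pdivlMr // -mulrA (mulrC 2^-1) -invfM (mulrC (1 + _)).
  exact: h2.
by rewrite ltr_pdivrMr // ltr_pMr // ltr1n.
Qed.
Unset Implicit Arguments.

Theorem lemma5 (R : realType) (Th : set R) (n : nat)
  (H : nat -> nat -> probability R R)
  (d : measure_display) (Omega : measurableType d) (P : probability Omega R)
  (M : Omega -> nat -> nat -> R) (G : Omega -> probability R R) :
  is_Theta Th ->
  (forall j l, (1 <= j <= n.+1)%N -> (1 <= l <= 2 ^ j - 1)%N -> odd l ->
     PTheta Th (H j l)) ->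
  is_DSBA P Th n H M ->
  {ae P, forall w,
     (forall l1 l2, (1 <= l1 <= 2 ^ n - 1)%N -> (1 <= l2 <= 2 ^ n - 1)%N ->
        M w n l1 = M w n l2 -> l1 = l2) /\
     exists Q : probability R R,
       [/\ PTheta Th Q, finite_mean Q, regular_sba Th Q n &
           forall j l, (1 <= j <= n.+1)%N -> (1 <= l <= 2 ^ j - 1)%N ->
             sba Th Q j l = (M w j l)%:E]} ->
  (forall w A, measurable A -> G w A = Tn (M w) n A) ->
  (forall w, PTheta Th (G w)) /\
  (forall B, weak_borel Th B -> measurable (G @^-1` B)) /\
  (forall p : R, 1 <= p ->
     (forall w, Pp Th p (G w)) /\
     (forall B, Wp_borel Th p B -> measurable (G @^-1` B))).
Proof.
move=> hTh _ [hM _ h3 _ _] _ hG.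
pose K := (2 ^ n)%N.
pose a w i := M w n.+1 (2 * i.+1 - 1)%N.
pose c w i := wgt (M w) n i.+1.
have H3 w : forall k, (1 <= k <= 2 ^ n)%N ->
    ocI (ext_entry Th (M w) n k.-1) (ext_entry Th (M w) n k) (M w n.+1 (2 * k - 1)%N).
  by move=> k hk; apply: (h3 w n.+1 k); [rewrite /= leqnn|exact: hk].
have hTha w i : (i < K)%N -> Th (a w i).
  move=> iK; have [hi hs] := atom_bounds (H3 w) (k := i.+1) iK.
  exact: inTh hTh hi hs.
have hinj w i j : (i < K)%N -> (j < K)%N -> a w i = a w j -> i = j.
  by move=> iK jK e; have := atom_inj (H3 w) (i := i.+1) (j := j.+1) iK jK e; case.
have hrep w A : measurable A -> G w A = \sum_(i < K) ((c w i)%:E * \d_(a w i) A)%E.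
  by move=> mA; rewrite hG // /Tn big_add1 /= big_mkord.
have hsum w : \sum_(i < K) c w i = 1.
  by rewrite -(sum_wgt (M w) n) big_add1 /= big_mkord.
have hc0 w i : (i < K)%N -> 0 <= c w i := rep_ge0 (hrep w) (hinj w) (i := i).
have hc1 w i : (i < K)%N -> c w i <= 1 :=
  rep_le1 (hrep w) (hinj w) (i := i) (probability_setT (G w)).
have mTh : measurable Th.
  case: hTh => [->|[[x0 ->]|[[x0 ->]|[x0 [y0 [_ ->]]]]]].
  - exact: measurableT.
  - by apply: closed_measurable; exact: closed_ge.
  - by apply: closed_measurable; exact: closed_le.
  - rewrite (_ : [set x | x0 <= x <= y0] = [set x | x0 <= x] `&` [set x | x <= y0]).
      by apply: measurableI; apply: closed_measurable; [exact: closed_ge|exact: closed_le].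
    by apply/seteqP; split => x /=; [move/andP|move=> [-> ->]].
have PT w : PTheta Th (G w).
  rewrite /PTheta /= (rep_real (hrep w)) // -[X in _ = X%:E](hsum w).
  by congr EFin; apply: eq_bigr => i _; rewrite mem_set ?mulr1 //; apply: hTha.
pose gp i w := if (i < K)%N then a w i else c w (i - K)%N.
have mg i : (i < K + K)%N -> measurable_fun setT (gp i).
  move=> iKK; rewrite /gp; case: ltnP => iK.
    apply: hM; first by rewrite ltn0Sn leqnn.
    move: iK; rewrite expnS /K; move: (2 ^ n)%N => k; lia.
  rewrite /c /wgt; apply: measurable_funB; apply: (Fv_meas hM (leqnn n)).
    by move: iKK iK; rewrite /K; move: (2 ^ n)%N => k; lia.
  by move: iKK iK; rewrite /K; move: (2 ^ n)%N => k; lia.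
have hclose w w' h : (forall i, (i < K + K)%N -> `|gp i w' - gp i w| < h) ->
    forall i, (i < K)%N -> `|a w' i - a w i| < h /\ `|c w' i - c w i| < h.
  move=> hh i iK; split.
    by have := hh i (ltn_addr K iK); rewrite /gp iK.
  have hF : (K + i < K)%N = false by apply/negbTE; rewrite -leqNgt leq_addr.
  have := hh (K + i)%N; rewrite /gp hF addKn; apply.
  by rewrite ltn_add2l.
split; first exact: PT.
split.
  move=> B hB; apply: (borel_pre PT _ hB) => U hU.
  apply: (LPopen_measurable mg).
  suff : OG gp (K + K)%N G (PTheta Th) U by case.
  apply: hU; first exact: OG_top.
  move=> U' [f [V [[B0 hB0] cf oV ->]]]; split; first by move=> Q [].
  move=> w [_ Vw].
  have mf : measurable_fun Th f := subspace_continuous_measurable_fun mTh cf.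
  have intE w' : fine (\int[G w']_(x in Th) (f x)%:E)%E =
      \sum_(i < K) c w' i * f (a w' i).
    rewrite (rep_int (hrep w') (hinj w') mTh mf) /=; apply: eq_bigr => i _.
    by rewrite mem_set ?mul1r //; exact: hTha.
  move: Vw; rewrite intE => Vw.
  have /nbhs_ballP [del del0 hdel] : nbhs (\sum_(i < K) c w i * f (a w i)) V.
    exact: open_nbhs_nbhs (conj oV Vw).
  have [h h0 hh] := sum_cont (c w) hB0 cf (hTha w) del0.
  exists h => // w' hw'; split; first exact: PT.
  rewrite intE; apply: hdel; rewrite /ball /= distrC.
  have hc := hclose w w' h hw'.
  apply: hh => i iK; [exact: hTha| |exact: hc].
  by rewrite ger0_norm ?hc0 ?hc1.
move=> p p1.
have Pp_G w : Pp Th p (G w).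
  split; first exact: PT.
  have mg' : measurable_fun Th (fun x : R => `|x| `^ p).
    apply: measurable_funTS; apply: (measurableT_comp (measurable_powR p)).
    exact: normr_measurable.
  by rewrite (rep_int (hrep w) (hinj w) mTh mg') ltey.
split; first exact: Pp_G.
move=> B hB; apply: (borel_pre Pp_G _ hB) => U [UPp hU].
apply: (LPopen_measurable mg) => w Uw.
have [e e0 he] := hU _ Uw.
have [h h0 hh] := Wp_cont p1 (hrep w) (hc0 w) (hsum w) e0.
exists h => // w' hw'; apply: he; first exact: Pp_G.
apply: (hh (G w') (a w') (c w') (hrep w') (hc0 w') (hsum w')).
exact: hclose.
Qed.
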